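(* Let $f\in\mathbb{R}[x]$ be squarefree of degree $n$, $f=f_n(x-\xi_1)\cdots(x-\xi_n)$ with pairwise distinct $\xi_i\in\mathbb{C}$, where $\xi_1,\dots,\xi_k$ are the real roots ($0\le k\le n$) and the non-real roots are labeled so that $\xi_{k+2i-1}=\overline{\xi_{k+2i}}$ for $1\le i\le \frac{n-k}{2}$. Let $u_1,\dots,u_n\in\mathbb{C}[x]$ be the Lagrange basis $u_i=\prod_{j\neq i}\frac{x-\xi_j}{\xi_i-\xi_j}$. Let $g\in\mathbb{R}[x]$ satisfy $g(\xi_i)>0$ for $1\le i\le k$. Fix real numbers $\lambda_i>|g(\xi_{k+2i})|$ for $1\le i\le\frac{n-k}{2}$ and set $$h=\sum_{i=1}^n g(\xi_i)\,u_i^2+2\sum_{i=1}^{(n-k)/2}\lambda_i\,u_{k+2i-1}u_{k+2i}.$$ Then $h\in\mathbb{R}[x]$, $h\equiv g\pmod f$, and $h=\sum_{i=1}^n\omega_i h_i^2$, where: - $h_i=u_i$ and $\omega_i=g(\xi_i)$ for $1\le i\le k$; - for $1\le i\le\frac{n-k}{2}$, writing $\gamma_i=g(\xi_{k+2i})$, $$h_{k+2i-1}=\Re(u_{k+2i})-\frac{\Im(\gamma_i)}{\lambda_i+\Re(\gamma_i)}\Im(u_{k+2i}),\qquad h_{k+2i}=\frac{\sqrt{\lambda_i^2-|\gamma_i|^2}}{\lambda_i+\Re(\gamma_i)}\Im(u_{k+2i}),$$ and $\omega_{k+2i-1}=\omega_{k+2i}=2(\lambda_i+\Re(\gamma_i))$.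 Moreover all $\omega_i>0$, and $h_1,\dots,h_n$ are linearly independent polynomials in $\mathbb{R}[x]$ of degree $<n$.
   Context: For a polynomial $u\in\mathbb{C}[x]$, $\Re(u)$ and $\Im(u)$ denote the real polynomials obtained by taking real and imaginary parts of the coefficients, so $u=\Re(u)+\mathbf{i}\,\Im(u)$. *)

(* Defs.v *)
From HB Require Import structures.
From mathcomp Require Import all_boot all_order all_algebra.
From mathcomp Require Import reals.
From mathcomp.real_closed Require Export complex.
Set Implicit Arguments. Unset Strict Implicit. Unset Printing Implicit Defensive.
Import Order.TTheory GRing.Theory Num.Theory.
Local Open Scope ring_scope.

Section Defs.
Variable R : realType.
Local Notation C := R[i].

Definition polyRC (p : {poly R}) : {poly C} := map_poly (real_complex R) p.

Definition polyRe (u : {poly C}) : {poly R} := map_poly (@complex.Re R) u.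
Definition polyIm (u : {poly C}) : {poly R} := map_poly (@complex.Im R) u.

Definition cabs (z : C) : R := ComplexField.Normc.normc z.

(* Lagrange basis (0-based indices): u_i = prod_{j<n, j<>i} (x - xi_j)/(xi_i - xi_j) *)
Definition lagr_basis (n : nat) (xi : nat -> C) (i : nat) : {poly C} :=
  \prod_(j < n | (j : nat) != i) (('X - (xi j)%:P) * ((xi i - xi j)^-1)%:P).

Definition hpoly (n k : nat) (xi : nat -> C) (g : {poly R}) (lam : nat -> R)
  : {poly C} :=
  \sum_(i < n) (polyRC g).[xi i] *: (lagr_basis n xi i) ^+ 2
  + 2%:R * \sum_(i < (n - k)./2)
       real_complex R (lam i) *: (lagr_basis n xi (k + 2 * i) * lagr_basis n xi (k + 2 * i).+1).

(* gamma_i = g(xi_{k+2i+1}) (0-based; paper: g(xi_{k+2i}) 1-based) *)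
Definition gam (k : nat) (xi : nat -> C) (g : {poly R}) (i : nat) : C :=
  (polyRC g).[xi (k + 2 * i).+1].

Definition hcomp (n k : nat) (xi : nat -> C) (g : {poly R}) (lam : nat -> R)
  (j : nat) : {poly R} :=
  if (j < k)%N then polyRe (lagr_basis n xi j)
  else
    let i := (j - k)./2 in
    let ga := gam k xi g i in
    let v := lagr_basis n xi (k + 2 * i).+1 in
    if ~~ odd (j - k) then
      polyRe v - (complex.Im ga / (lam i + complex.Re ga)) *: polyIm v
    else
      (Num.sqrt (lam i ^+ 2 - cabs ga ^+ 2) / (lam i + complex.Re ga)) *: polyIm v.

Definition wcoef (n k : nat) (xi : nat -> C) (g : {poly R}) (lam : nat -> R)
  (j : nat) : R :=
  if (j < k)%N then complex.Re (polyRC g).[xi j]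
  else 2%:R * (lam ((j - k)./2) + complex.Re (gam k xi g ((j - k)./2))).

End Defs.

(* Main.v *)
Require Import Defs.
From HB Require Import structures.
From mathcomp Require Import all_boot all_order all_algebra.
From mathcomp Require Import reals.
From mathcomp.real_closed Require Import complex.
From mathcomp Require Import ring lra zify.
Import Order.TTheory GRing.Theory Num.Theory.
Local Open Scope ring_scope.

Lemma pair_alg_C (T : comNzRingType) (A B I L P Q : T) : I * I = -1 ->
  (2%:R*(L+P)) * A^+2 - (4%:R*Q) * (A*B) + (2%:R*(L-P))*B^+2 =
  (P - I*Q)*(A - I*B)^+2 + (P + I*Q)*(A + I*B)^+2 + 2%:R * (L*((A - I*B)*(A+I*B))).
Proof.
move=> hI.
have -> : (P - I*Q)*(A - I*B)^+2 + (P + I*Q)*(A + I*B)^+2 + 2%:R * (L*((A - I*B)*(A+I*B)))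
  = 2%:R*(L+P)*A^+2 + 2%:R*(P-L)*(I*I)*B^+2 + 4%:R*Q*(I*I)*A*B by ring.
rewrite hI; ring.
Qed.

Lemma pair_alg_R (T : comNzRingType) (w t s P Q : T) :
  w * (P - t*Q)^+2 + w*(s*Q)^+2 = w*P^+2 - 2%:R*(w*t)*(P*Q) + (w*(t^+2+s^+2))*Q^+2.
Proof. ring. Qed.

Lemma sum_pairs (V : nmodType) (F : nat -> V) M :
  \sum_(i < M.*2) F i = \sum_(h < M) (F (2*h)%N + F (2*h).+1).
Proof.
elim: M => [|M IH]; first by rewrite !big_ord0.
rewrite doubleS !big_ord_recr /= IH addrA; congr (_ + _ + _).
- congr F; lia.
- congr F; lia.
Qed.

Section Main.
Variable R : realType.
Local Notation C := R[i].
Variables (n k : nat) (f g : {poly R}) (xi : nat -> C) (lam : nat -> R).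
Hypothesis hkn : (k <= n)%N.
Hypothesis hnk_even : ~~ odd (n - k).
Hypothesis hdistinct : forall i j : nat, (i < n)%N -> (j < n)%N -> xi i = xi j -> i = j.
Hypothesis hreal : forall i : nat, (i < k)%N -> complex.Im (xi i) = 0.
Hypothesis hpair : forall i : nat, (i < (n - k)./2)%N ->
             xi (k + 2 * i)%N = conjc (xi (k + 2 * i).+1).

Hypothesis hgpos : forall i : nat, (i < k)%N -> 0 < (polyRC g).[xi i].
Hypothesis hlam : forall i : nat, (i < (n - k)./2)%N -> cabs (gam k xi g i) < lam i.

Local Notation m := ((n - k)./2).
Local Notation u := (lagr_basis n xi).
Local Notation hc := (hcomp n k xi g lam).
Local Notation wc := (wcoef n k xi g lam).
Local Notation ga := (gam k xi g).
Local Notation v h := (u (k + 2 * h).+1).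
Local Notation tt h := (complex.Im (ga h) / (lam h + complex.Re (ga h))).
Local Notation ss h := (Num.sqrt (lam h ^+ 2 - cabs (ga h) ^+ 2) / (lam h + complex.Re (ga h))).

Lemma hn2 : n = (k + m.*2)%N.
Proof. have := even_halfK hnk_even; lia. Qed.

Lemma u_eval i j : (i < n)%N -> (j < n)%N -> (u i).[xi j] = (i == j)%:R.
Proof.
move=> hi hj; rewrite /lagr_basis horner_prod.
have [<-|nij] := eqVneq i j.
  apply: big1 => l hl; rewrite hornerM hornerXsubC hornerC mulfV // subr_eq0.
  apply/eqP => e; move: hl; rewrite (hdistinct _ _ hi (ltn_ord l) e) eqxx //.
rewrite (bigD1 (Ordinal hj)) /=; last by rewrite eq_sym.
by rewrite hornerM hornerXsubC subrr !mul0r.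
Qed.

Lemma size_u i : (i < n)%N -> (size (u i) <= n)%N.
Proof.
move=> hi; rewrite /lagr_basis.
have H : forall (r : seq 'I_n) (P : pred 'I_n),
  (size (\prod_(j <- r | P j) (('X - (xi j)%:P) * ((xi i - xi j)^-1)%:P))%R <= (\sum_(j <- r | P j) 1%N).+1)%N.
  move=> r P; apply: (big_rec2 (fun (p : {poly C}) (s : nat) => (size p <= s.+1)%N)).
    by rewrite size_poly1.
  move=> j p s _ hp; apply: leq_trans (size_mul_leq _ _) _.
  have h1 : (size (('X - (xi j)%:P) * ((xi i - xi j)^-1)%:P)%R <= 2)%N.
    apply: leq_trans (size_mul_leq _ _) _; rewrite size_XsubC.
    by case: (size _) (size_polyC_leq1 ((xi i - xi j)^-1)) => [|[|]].
  move: h1 hp; case: (size _) => [|a]; case: (size p) => [|b] /=; lia.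
apply: leq_trans (H _ _) _.
have e : (\sum_(j < n) 1 = n)%N by rewrite sum1_card card_ord.
rewrite (bigD1 (Ordinal hi)) //= in e.
rewrite (eq_bigl (fun j : 'I_n => j != Ordinal hi)); first by move: e; move: (\sum_(_ < n | _) _) => s; lia.
by [].
Qed.

Lemma vanish (p : {poly C}) : (size p <= n)%N ->
  (forall j, (j < n)%N -> p.[xi j] = 0) -> p = 0.
Proof.
move=> hs hv; apply/eqP; apply: contraT => hp.
have := max_poly_roots (rs := mkseq xi n) hp.
rewrite size_mkseq => H.
suff : (n < size p)%N by lia.
apply: H.
- apply/allP => x /mapP [j]; rewrite mem_iota => /andP[_ hj] ->.
  apply/rootP; apply: hv; lia.
- apply/mkseq_uniqP => a b; rewrite !inE => ha hb; exact: hdistinct.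
Qed.


Definition sig (j : nat) : nat :=
  if (j < k)%N then j else if odd (j - k) then j.-1 else j.+1.

Lemma idx_cases j : (j < n)%N -> (j < k)%N \/
  (exists2 h, (h < m)%N & j = (k + 2*h)%N) \/ (exists2 h, (h < m)%N & j = (k + 2*h).+1).
Proof.
move=> hj; case: (ltnP j k) => hjk; [by left|right].
have e1 := odd_double_half (j - k); have e2 := even_halfK hnk_even.
case: (boolP (odd (j - k))) => ho; [right|left]; exists ((j-k)./2); rewrite ?ho /= in e1; lia.
Qed.

Lemma sig_real j : (j < k)%N -> sig j = j.
Proof. by rewrite /sig => ->. Qed.
Lemma sig_even h : (h < m)%N -> sig (k+2*h) = (k+2*h).+1.
Proof.
move=> hh; rewrite /sig ltnNge leq_addr /= addKn oddM andFb //.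
Qed.
Lemma sig_odd h : (h < m)%N -> sig (k+2*h).+1 = (k+2*h)%N.
Proof.
move=> hh; rewrite /sig.
have -> : ((k + 2*h).+1 < k)%N = false by lia.
have -> : ((k + 2 * h).+1 - k)%N = (2*h).+1 by lia.
by rewrite /= oddM andFb.
Qed.

Lemma sig_lt j : (j < n)%N -> (sig j < n)%N.
Proof.
move=> hj; have e := hn2.
case: (idx_cases _ hj) => [hr|[[h hh ->]|[h hh ->]]].
- by rewrite sig_real.
- rewrite sig_even //; lia.
- rewrite sig_odd //; lia.
Qed.

Lemma sigK j : (j < n)%N -> sig (sig j) = j.
Proof.
move=> hj; case: (idx_cases _ hj) => [hr|[[h hh ->]|[h hh ->]]].
- by rewrite !sig_real.
- by rewrite sig_even // sig_odd.
- by rewrite sig_odd // sig_even.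
Qed.

Lemma conj_xi j : (j < n)%N -> conjc (xi j) = xi (sig j).
Proof.
move=> hj; case: (idx_cases _ hj) => [hr|[[h hh ->]|[h hh ->]]].
- rewrite sig_real //; move: (hreal _ hr); case: (xi j) => a b /= ->.
  by rewrite oppr0.
- by rewrite sig_even // hpair // conjcK.
- by rewrite sig_odd // hpair.
Qed.

Lemma sig_eq i j : (i < n)%N -> (j < n)%N -> (i == sig j) = (sig i == j).
Proof.
move=> hi hj; apply/eqP/eqP => [->|<-]; by rewrite sigK.
Qed.

Lemma conj_u i : (i < n)%N -> map_poly conjc (u i) = u (sig i).
Proof.
move=> hi; apply/eqP; rewrite -subr_eq0; apply/eqP; apply: vanish.
  apply: leq_trans (size_polyD _ _) _; rewrite size_polyN.
  rewrite (size_map_inj_poly (can_inj (@conjcK R))) ?conjc0 //.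
  by rewrite geq_max !size_u // sig_lt.
move=> j hj; rewrite hornerD hornerN.
have -> : xi j = conjc (xi (sig j)) by rewrite conj_xi ?sig_lt // sigK.
rewrite horner_map u_eval ?sig_lt // conj_xi ?sig_lt // sigK // u_eval ?sig_lt //.
by rewrite sig_eq // rmorph_nat subrr.
Qed.

Lemma polyRC_coef p j : (polyRC p)`_j = real_complex R (p`_j).
Proof. by rewrite /polyRC coef_map. Qed.

Lemma ReIm_dec (v : {poly C}) : v = polyRC (polyRe v) + ('i%C)%:P * polyRC (polyIm v).
Proof.
apply/polyP => j; rewrite coefD coefCM !polyRC_coef /polyRe /polyIm !coef_map_id0 //.
exact: complexE.
Qed.

Lemma ReIm_conj (v : {poly C}) :
  map_poly conjc v = polyRC (polyRe v) - ('i%C)%:P * polyRC (polyIm v).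
Proof.
apply/polyP => j; rewrite coefB coefCM !polyRC_coef /polyRe /polyIm !coef_map_id0 //.
  by case: (v`_j) => a b /=; simpc.
by rewrite conjc0.
Qed.

Lemma realpoly (v : {poly C}) : map_poly conjc v = v -> polyRC (polyRe v) = v.
Proof.
move=> /polyP H; apply/polyP => j; rewrite polyRC_coef /polyRe coef_map_id0 //.
move: (H j); rewrite coef_map_id0 ?conjc0 //; case: (v`_j) => a b /= [] hb.
by congr Complex; lra.
Qed.


Lemma sum_blocks (V : nmodType) N (F : nat -> V) : N = (k + m.*2)%N ->
  \sum_(j < N) F j = \sum_(j < k) F j + \sum_(h < m) (F (k + 2*h)%N + F (k + 2*h).+1).
Proof.
move=> ->; rewrite big_split_ord /=; congr (_ + _).
rewrite (@sum_pairs _ (fun i => F (k + i)%N)).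
by apply: eq_bigr => h _; rewrite addnS.
Qed.


Lemma hcomp_real j : (j < k)%N -> hc j = polyRe (u j).
Proof. by move=> hj; rewrite /hcomp hj. Qed.

Lemma half2 h : ((k + 2 * h - k)./2 = h)%N.
Proof. by rewrite addKn mul2n doubleK. Qed.
Lemma half2S h : (((k + 2 * h).+1 - k)./2 = h)%N.
Proof.
have -> : ((k + 2 * h).+1 - k = (2*h).+1)%N by lia.
by rewrite -[(2*h)%N.+1]/(true + 2*h)%N mul2n half_bit_double.
Qed.

Lemma hcomp_even h : hc (k + 2 * h)%N = polyRe (v h) - (tt h) *: polyIm (v h).
Proof. by rewrite /hcomp ltnNge leq_addr /= half2 addKn oddM andFb. Qed.

Lemma hcomp_odd h : hc (k + 2 * h).+1 = (ss h) *: polyIm (v h).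
Proof.
rewrite /hcomp.
have -> : ((k + 2*h).+1 < k)%N = false by lia.
rewrite half2S.
have -> : ((k + 2 * h).+1 - k = (2*h).+1)%N by lia.
by rewrite /= oddM andFb.
Qed.

Lemma wcoef_real j : (j < k)%N -> wc j = complex.Re (polyRC g).[xi j].
Proof. by move=> hj; rewrite /wcoef hj. Qed.
Lemma wcoef_even h : wc (k + 2 * h)%N = 2%:R * (lam h + complex.Re (ga h)).
Proof. by rewrite /wcoef ltnNge leq_addr /= half2. Qed.
Lemma wcoef_odd h : wc (k + 2 * h).+1 = 2%:R * (lam h + complex.Re (ga h)).
Proof.
rewrite /wcoef.
have -> : ((k + 2*h).+1 < k)%N = false by lia.
by rewrite half2S.
Qed.

Lemma cabs_sq (z : C) : cabs z ^+ 2 = complex.Re z ^+ 2 + complex.Im z ^+ 2.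
Proof.
by case: z => a b; rewrite /cabs /= sqr_sqrtr // addr_ge0 ?sqr_ge0.
Qed.
Lemma cabs_ge0 (z : C) : 0 <= cabs z.
Proof. by case: z => a b; rewrite /cabs /= sqrtr_ge0. Qed.

Lemma a_pos h : (h < m)%N -> 0 < lam h + complex.Re (ga h).
Proof.
move=> hh; have := hlam h hh; have := cabs_sq (ga h); have := cabs_ge0 (ga h).
move: (cabs _) (complex.Re _) (complex.Im _) => c p q; nra.
Qed.

Lemma ss_pos h : (h < m)%N -> 0 < ss h.
Proof.
move=> hh; apply: divr_gt0; last exact: a_pos.
rewrite sqrtr_gt0 subr_gt0; have := hlam h hh; have := cabs_ge0 (ga h).
move: (cabs _) => c; nra.
Qed.

Lemma scal_E1 h : (h < m)%N -> 2%:R * (lam h + complex.Re (ga h)) * tt h = 2%:R * complex.Im (ga h).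
Proof. by move=> hh; have := a_pos h hh; move=> ha; field; lra. Qed.

Lemma scal_E2 h : (h < m)%N -> 2%:R * (lam h + complex.Re (ga h)) * (tt h ^+ 2 + ss h ^+ 2)
   = 2%:R * (lam h - complex.Re (ga h)).
Proof.
move=> hh; have ha := a_pos h hh.
have hs : Num.sqrt (lam h ^+ 2 - cabs (ga h) ^+ 2) ^+ 2 = lam h ^+ 2 - cabs (ga h) ^+ 2.
  rewrite sqr_sqrtr // subr_ge0; have := hlam h hh; have := cabs_ge0 (ga h).
  move: (cabs _) => c; nra.
rewrite !expr_div_n hs cabs_sq; field; lra.
Qed.


Lemma conj_polyRC (p : {poly R}) : map_poly conjc (polyRC p) = polyRC p.
Proof.
apply/polyP => j; rewrite coef_map /= polyRC_coef.
exact: conjc_real.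
Qed.

Lemma gconj (z : C) : (polyRC g).[conjc z] = conjc (polyRC g).[z].
Proof. by rewrite -{1}conj_polyRC horner_map. Qed.

Lemma g_pair h : (h < m)%N -> (polyRC g).[xi (k + 2 * h)%N] = conjc (ga h).
Proof. by move=> hh; rewrite hpair // gconj. Qed.

Lemma w_conj h : (h < m)%N -> u (k + 2 * h)%N = map_poly conjc (v h).
Proof.
move=> hh; rewrite conj_u ?sig_odd //.
have := hn2; lia.
Qed.

Lemma greal j : (j < k)%N -> real_complex R (complex.Re (polyRC g).[xi j]) = (polyRC g).[xi j].
Proof.
move=> hj; have := hgpos j hj; move/ltW/ger0_Im.
by case: ((polyRC g).[xi j]) => a b /= ->.
Qed.

Lemma hcomp_realC j : (j < k)%N -> polyRC (hc j) = u j.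
Proof.
move=> hj; rewrite hcomp_real // realpoly // conj_u; last lia.
by rewrite sig_real.
Qed.


Lemma pRC_D (p q : {poly R}) : polyRC (p + q) = polyRC p + polyRC q.
Proof. by rewrite /polyRC rmorphD. Qed.
Lemma pRC_B (p q : {poly R}) : polyRC (p - q) = polyRC p - polyRC q.
Proof. by rewrite /polyRC rmorphB. Qed.
Lemma pRC_N (p : {poly R}) : polyRC (- p) = - polyRC p.
Proof. by rewrite /polyRC rmorphN. Qed.
Lemma pRC_M (p q : {poly R}) : polyRC (p * q) = polyRC p * polyRC q.
Proof. by rewrite /polyRC rmorphM. Qed.
Lemma pRC_X (p : {poly R}) (e : nat) : polyRC (p ^+ e) = polyRC p ^+ e.
Proof. by rewrite /polyRC rmorphXn. Qed.
Lemma pRC_Z (c : R) (p : {poly R}) : polyRC (c *: p) = real_complex R c *: polyRC p.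
Proof. by rewrite /polyRC map_polyZ. Qed.
Lemma pRC_sum (I : Type) (r : seq I) (P : pred I) (F : I -> {poly R}) :
  polyRC (\sum_(i <- r | P i) F i) = \sum_(i <- r | P i) polyRC (F i).
Proof. by rewrite /polyRC rmorph_sum. Qed.

Lemma conj_dec (z : C) : conjc z = real_complex R (complex.Re z) - 'i%C * real_complex R (complex.Im z).
Proof. by case: z => a b /=; simpc. Qed.

Lemma pair_id h : (h < m)%N ->
  polyRC (wc (k + 2 * h)%N *: hc (k + 2 * h)%N ^+ 2 + wc (k + 2 * h).+1 *: hc (k + 2 * h).+1 ^+ 2)
  = (polyRC g).[xi (k + 2 * h)%N] *: u (k + 2 * h)%N ^+ 2 + (polyRC g).[xi (k + 2 * h).+1] *: v h ^+ 2
    + 2%:R * (real_complex R (lam h) *: (u (k + 2 * h)%N * v h)).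
Proof.
move=> hh.
rewrite hcomp_even hcomp_odd wcoef_even wcoef_odd.
set P := polyRe (v h); set Q := polyIm (v h).
set p := complex.Re (ga h); set q := complex.Im (ga h).
have E : 2%:R * (lam h + p) *: (P - tt h *: Q) ^+ 2 + 2%:R * (lam h + p) *: (ss h *: Q) ^+ 2
   = (2%:R * (lam h + p)) *: P ^+ 2 - (4%:R * q) *: (P * Q) + (2%:R * (lam h - p)) *: Q ^+ 2.
  rewrite -!mul_polyC.
  transitivity ((2%:R * (lam h + p))%:P * P^+2 - 2%:R * ((2%:R * (lam h + p)) * tt h)%:P * (P*Q)
     + ((2%:R * (lam h + p)) * (tt h^+2 + ss h^+2))%:P * Q^+2); first ring.
  rewrite scal_E1 // scal_E2 //; ring.
rewrite E !(pRC_D, pRC_N, pRC_Z, pRC_X, pRC_M).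
rewrite g_pair // w_conj // ReIm_conj -/P -/Q.
rewrite [v h](ReIm_dec (v h)) -/P -/Q.
rewrite -[(polyRC g).[xi (k + 2 * h).+1]]/(ga h).
rewrite conj_dec -/p -/q [ga h]complexE -/p -/q.
set A := polyRC P; set B := polyRC Q.
rewrite -!mul_polyC.
have hI : ('i%C)%:P * ('i%C)%:P = -1 :> {poly C}.
  by rewrite -polyCM -expr2 sqr_i rmorphN1.
have := @pair_alg_C _ A B (('i%C)%:P) ((real_complex R (lam h))%:P) ((real_complex R p)%:P) ((real_complex R q)%:P) hI.
move=> H.
transitivity ((2%:R * ((real_complex R (lam h))%:P + (real_complex R p)%:P)) * A ^+ 2 -
       (4%:R * (real_complex R q)%:P) * (A * B) +
       (2%:R * ((real_complex R (lam h))%:P - (real_complex R p)%:P)) * B ^+ 2); first ring.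
rewrite H; ring.
Qed.


Lemma hR_sum : polyRC (\sum_(j < n) wc j *: hc j ^+ 2) = hpoly n k xi g lam.
Proof.
rewrite (@sum_blocks _ n (fun j => wc j *: hc j ^+ 2) hn2).
rewrite /hpoly (@sum_blocks _ n (fun j => (polyRC g).[xi j] *: u j ^+ 2) hn2).
rewrite pRC_D !pRC_sum -addrA; congr (_ + _).
  apply: eq_bigr => j _; rewrite pRC_Z pRC_X hcomp_realC // wcoef_real // greal //.
rewrite mulr_sumr -big_split /=; apply: eq_bigr => h _.
by rewrite pair_id.
Qed.

Lemma hpoly_eval j : (j < n)%N -> (hpoly n k xi g lam).[xi j] = (polyRC g).[xi j].
Proof.
move=> hj; rewrite /hpoly hornerD hornerM !horner_sum.
rewrite (bigD1 (Ordinal hj)) //= hornerZ horner_exp u_eval // eqxx expr1n mulr1.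
rewrite big1 ?addr0; last first.
  move=> i hi; rewrite hornerZ horner_exp u_eval //.
  by rewrite (negbTE (hi : (i:nat) != j)) expr0n /= mulr0.
rewrite big1 ?mulr0 ?addr0 //.
move=> i _; have := hn2; have := ltn_ord i => h1 h2.
rewrite hornerZ hornerM !u_eval; [|lia|lia|lia|lia].
case: eqP => [<-|_]; last by rewrite mul0r mulr0.
have -> : ((k + 2 * i).+1 == (k + 2 * i))%N = false by lia.
by rewrite mulr0 mulr0.
Qed.

Hypothesis hdeg : size f = n.+1.
Hypothesis hfact : polyRC f = real_complex R (lead_coef f) *: \prod_(j < n) ('X - (xi j)%:P).

Lemma main_mod : (\sum_(j < n) wc j *: hc j ^+ 2) %% f = g %% f.
Proof.
set hR := \sum_(j < n) _.
apply/eqP; rewrite -subr_eq0 -modpN -modpD; apply/eqP/modp_eq0P.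
rewrite -(dvdp_map (real_complex R)).
rewrite -[map_poly _ f]/(polyRC f) hfact dvdpZl; last first.
  apply/eqP => H; have : lead_coef f = 0 by apply: complexI; rewrite H rmorph0.
  by move/eqP; rewrite lead_coef_eq0 => /eqP H0; move: hdeg; rewrite H0 size_poly0.
have -> : \prod_(j < n) ('X - (xi j)%:P) = \prod_(z <- mkseq xi n) ('X - z%:P).
  by rewrite /mkseq big_map -(big_mkord xpredT (fun j => 'X - (xi j)%:P)) /index_iota subn0.
apply: uniq_roots_dvdp.
- apply/allP => x /mapP [j]; rewrite mem_iota => /andP[_ hj] ->.
  rewrite add0n in hj.
  apply/rootP; rewrite -[map_poly _ _]/(polyRC (hR - g)) pRC_B hornerD hornerN.
  by rewrite hR_sum hpoly_eval // subrr.
- rewrite uniq_rootsE; apply/mkseq_uniqP => a b; rewrite !inE => ha hb; exact: hdistinct.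
Qed.


Lemma i_neq0 : ('i%C : C) != 0.
Proof. by rewrite eq_complex /= oner_eq0 andbF. Qed.

Lemma AB_eval h l : (h < m)%N -> (l < n)%N ->
  ((polyRC (polyRe (v h))).[xi l] + 'i%C * (polyRC (polyIm (v h))).[xi l] = ((k + 2*h).+1 == l)%:R) /\ ((polyRC (polyRe (v h))).[xi l] - 'i%C * (polyRC (polyIm (v h))).[xi l] = ((k + 2*h)%N == l)%:R).
Proof.
move=> hh hl; have h1 : ((k + 2*h).+1 < n)%N by have := hn2; lia.
have h0 : ((k + 2*h) < n)%N by have := hn2; lia.
split.
  by rewrite -(u_eval _ _ h1 hl) [in RHS](ReIm_dec (v h)) hornerD hornerCM.
by rewrite -(u_eval _ _ h0 hl) w_conj // ReIm_conj hornerD hornerN hornerCM.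
Qed.

Lemma AB_zero h l : (h < m)%N -> (l < n)%N -> l != (k + 2*h)%N -> l != (k + 2*h).+1 ->
  (polyRC (polyRe (v h))).[xi l] = 0 /\ (polyRC (polyIm (v h))).[xi l] = 0.
Proof.
move=> hh hl n0 n1; have [e1 e2] := AB_eval h l hh hl.
rewrite eq_sym (negbTE n1) in e1; rewrite eq_sym (negbTE n0) in e2.
move: e1 e2; move: (polyRC (polyRe (v h))).[xi l] (polyRC (polyIm (v h))).[xi l] => a b e1 e2.
have ea : a = 0.
  have : (a + 'i%C * b) + (a - 'i%C * b) = 0 by rewrite e1 e2 addr0.
  rewrite addrACA subrr addr0 -mulr2n => /eqP; rewrite mulrn_eq0 /= => /eqP //.
split => //; move: e1; rewrite ea add0r => /eqP; rewrite mulf_eq0 (negbTE i_neq0) /=.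
by move/eqP.
Qed.

Lemma Ezero j l : (j < n)%N -> (l < n)%N -> j != l ->
  [|| (j < k)%N, (l < k)%N | ((j - k)./2 != (l - k)./2)%N] ->
  (polyRC (hc j)).[xi l] = 0.
Proof.
move=> hj hl njl hd; case: (idx_cases _ hj) => [hr|[[h hh ej]|[h hh ej]]].
- by rewrite hcomp_realC // u_eval // (negbTE njl).
- rewrite ej hcomp_even pRC_B pRC_Z hornerD hornerN hornerZ.
  have [||z1 z2] := AB_zero h l hh hl.
  + by rewrite eq_sym -ej.
  + apply/eqP => el; move: hd; rewrite ej el half2 half2S eqxx orbF; lia.
  by rewrite z1 z2 mulr0 subrr.
- rewrite ej hcomp_odd pRC_Z hornerZ.
  have [||z1 z2] := AB_zero h l hh hl.
  + apply/eqP => el; move: hd; rewrite ej el half2 half2S eqxx orbF; lia.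
  + by rewrite eq_sym -ej.
  by rewrite z2 mulr0.
Qed.

Lemma indep (c : 'I_n -> R) :
  \sum_(j < n) c j *: hc j = 0 -> forall j : 'I_n, c j = 0.
Proof.
move=> H.
have Hev l : (l < n)%N -> \sum_(j < n) real_complex R (c j) * (polyRC (hc j)).[xi l] = 0.
  move=> hl; have := congr1 (fun p => (polyRC p).[xi l]) H.
  rewrite /= pRC_sum horner_sum [polyRC 0]/polyRC rmorph0 horner0 => e.
  apply: etrans e; by apply: eq_bigr => j _; rewrite pRC_Z hornerZ.
have cz : forall j : 'I_n, real_complex R (c j) = 0 -> c j = 0.
  by move=> j e; apply: complexI; rewrite e.
move=> j0; case: (idx_cases _ (ltn_ord j0)) => [hr|[[h hh ej]|[h hh ej]]].
- apply: cz; have := Hev _ (ltn_ord j0).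
  rewrite (bigD1 j0) //= hcomp_realC // u_eval // eqxx mulr1 big1 ?addr0 //.
  by move=> j hj; rewrite Ezero ?mulr0 // hr orbT.
all: have hl1 : ((k + 2*h).+1 < n)%N by have := hn2; lia.
all: have hl0 : ((k + 2*h) < n)%N by have := hn2; lia.
all: set J1 := Ordinal hl1; set J0 := Ordinal hl0.
all: suff [c0 c1] : c J0 = 0 /\ c J1 = 0 by
  [have -> : j0 = J0 by apply: val_inj | have -> : j0 = J1 by apply: val_inj].
all: have := Hev _ hl1.
all: rewrite (bigD1 J1) //= (bigD1 J0) /=; last by rewrite -(inj_eq val_inj) /=; lia.
all: rewrite big1 ?addr0; last first.
1,3: move=> j /andP [hj1 hj0]; rewrite Ezero ?mulr0 //.
1,2:  case: (ltnP j k) => hjk; [by apply/orP; left | ];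
    rewrite half2S; apply/orP; right; apply/orP; right; apply/eqP => e;
    have := odd_double_half (j - k); rewrite e;
    rewrite -(inj_eq val_inj) /= in hj1; rewrite -(inj_eq val_inj) /= in hj0;
    case: odd => /= ?; lia.
all: rewrite hcomp_odd hcomp_even pRC_Z pRC_B pRC_Z hornerZ hornerD hornerN hornerZ.
all: have [e1 e2] := AB_eval h _ hh hl1.
all: rewrite eqxx in e1.
all: have ne : ((k + 2 * h)%N == (k + 2 * h).+1) = false by lia.
all: rewrite ne in e2.
all: move: e1 e2; move: (polyRC (polyRe (v h))).[xi (k + 2 * h).+1] (polyRC (polyIm (v h))).[xi (k + 2 * h).+1] => a b e1 e2.
all: have hs := ss_pos h hh.
all: move: (ss h) (tt h) hs => s t hs.
all: case: a e1 e2 => a1 a2; case: b => b1 b2.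
all: move/eqP; rewrite eq_complex /= => /andP [/eqP e1 /eqP e2].
all: move/eqP; rewrite eq_complex /= => /andP [/eqP e3 /eqP e4].
all: move/eqP; rewrite eq_complex /= => /andP [/eqP e5 /eqP e6].
all: move: (c J0) (c J1) e5 e6 => x y e5 e6.
all: have hb1 : b1 = 0 by lra.
all: have hb2 : b2 = - 2^-1 by lra.
all: have ha1 : a1 = 2^-1 by lra.
all: have ha2 : a2 = 0 by lra.
all: subst; split; nra.
Qed.

Lemma size_Re (v : {poly C}) : (size (polyRe v) <= size v)%N.
Proof. exact: size_poly. Qed.
Lemma size_Im (v : {poly C}) : (size (polyIm v) <= size v)%N.
Proof. exact: size_poly. Qed.

Lemma size_hc j : (j < n)%N -> (size (hc j) <= n)%N.
Proof.
move=> hj; case: (idx_cases _ hj) => [hr|[[h hh ej]|[h hh ej]]].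
- by rewrite hcomp_real //; apply: leq_trans (size_Re _) (size_u _ hj).
- have h1 : ((k + 2*h).+1 < n)%N by have := hn2; lia.
  rewrite ej hcomp_even; apply: leq_trans (size_polyD _ _) _; rewrite size_polyN geq_max.
  apply/andP; split; first by apply: leq_trans (size_Re _) (size_u _ h1).
  apply: leq_trans (size_scale_leq _ _) _; by apply: leq_trans (size_Im _) (size_u _ h1).
- have h1 : ((k + 2*h).+1 < n)%N by have := hn2; lia.
  rewrite ej hcomp_odd; apply: leq_trans (size_scale_leq _ _) _.
  by apply: leq_trans (size_Im _) (size_u _ h1).
Qed.


Lemma main_sec :
  (exists hR : {poly R},
      polyRC hR = hpoly n k xi g lam
   /\ hR %% f = g %% f
   /\ hR = \sum_(j < n) wcoef n k xi g lam j *: (hcomp n k xi g lam j) ^+ 2)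
  /\ (forall j : nat, (j < k)%N ->
        polyRC (hcomp n k xi g lam j) = lagr_basis n xi j
        /\ real_complex R (wcoef n k xi g lam j) = (polyRC g).[xi j])
  /\ (forall j : nat, (j < n)%N -> 0 < wcoef n k xi g lam j)
  /\ (forall c : 'I_n -> R,
        \sum_(j < n) c j *: hcomp n k xi g lam j = 0 -> forall j : 'I_n, c j = 0)
  /\ (forall j : nat, (j < n)%N -> (size (hcomp n k xi g lam j) <= n)%N).
Proof.
split.
  exists (\sum_(j < n) wc j *: hc j ^+ 2); split; first exact: hR_sum.
  by split; first exact: main_mod.
split; first by move=> j hj; split; [exact: hcomp_realC | rewrite wcoef_real // greal].
split; last by split; [exact: indep | exact: size_hc].
move=> j hj; case: (idx_cases _ hj) => [hr|[[h hh ->]|[h hh ->]]].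
- rewrite wcoef_real //; have := hgpos j hr; rewrite ltcE => /andP[_].
  by [].
- by rewrite wcoef_even mulr_gt0 // a_pos.
- by rewrite wcoef_odd mulr_gt0 // a_pos.
Qed.

End Main.

Theorem mainTheorem2 (R : realType) (n k : nat) (f g : {poly R})
  (xi : nat -> R[i]) (lam : nat -> R)
  (hkn : (k <= n)%N)
  (hnk_even : ~~ odd (n - k))
  (hdeg : size f = n.+1)
  (hfact : polyRC f = real_complex R (lead_coef f) *: \prod_(j < n) ('X - (xi j)%:P))
  (hdistinct : forall i j : nat, (i < n)%N -> (j < n)%N -> xi i = xi j -> i = j)
  (hreal : forall i : nat, (i < k)%N -> complex.Im (xi i) = 0)
  (hnonreal : forall i : nat, (k <= i < n)%N -> complex.Im (xi i) != 0)
  (hpair : forall i : nat, (i < (n - k)./2)%N ->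
             xi (k + 2 * i)%N = conjc (xi (k + 2 * i).+1))
  (hgpos : forall i : nat, (i < k)%N -> 0 < (polyRC g).[xi i])
  (hlam : forall i : nat, (i < (n - k)./2)%N -> cabs (gam k xi g i) < lam i) :
  (exists hR : {poly R},
      polyRC hR = hpoly n k xi g lam
   /\ hR %% f = g %% f
   /\ hR = \sum_(j < n) wcoef n k xi g lam j *: (hcomp n k xi g lam j) ^+ 2)
  /\ (forall j : nat, (j < k)%N ->
        polyRC (hcomp n k xi g lam j) = lagr_basis n xi j
        /\ real_complex R (wcoef n k xi g lam j) = (polyRC g).[xi j])
  /\ (forall j : nat, (j < n)%N -> 0 < wcoef n k xi g lam j)
  /\ (forall c : 'I_n -> R,
        \sum_(j < n) c j *: hcomp n k xi g lam j = 0 -> forall j : 'I_n, c j = 0)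
  /\ (forall j : nat, (j < n)%N -> (size (hcomp n k xi g lam j) <= n)%N).
Proof.
eapply main_sec; eassumption.
Qed.
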